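(* Let $\lambda\in\mathbb{R}$ and define, for $x>0$, $$f_\lambda(x)=[\psi'(x)]^2+\psi''(x)-\frac{x^2+\lambda x+12}{12x^4(x+1)^2}.$$ Then $f_\lambda$ is completely monotonic on $(0,\infty)$ if and only if $\lambda\le 0$.
   Context: $\Gamma$ is Euler's gamma function, $\psi=\Gamma'/\Gamma$ is the digamma function, and $\psi',\psi''$ are its first and second derivatives (tri- and tetragamma functions). A function $f$ is completely monotonic on an interval $I$ if $f$ has derivatives of all orders on $I$ and $0\le(-1)^n f^{(n)}(x)<\infty$ for all $x\in I$ and all integers $n\ge0$. *)

(* Defs.v *)
From Stdlib Require Import Arith Factorial Reals Lra.
Open Scope R_scope.

Fixpoint poch (x : R) (n : nat) : R :=
  match n with
  | O => x
  | S m => poch x m * (x + INR (S m))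
  end.

(* Gauss/Euler product approximants: Gamma(x) = lim n! n^x / (x (x+1) ... (x+n)) *)
Definition Gamma_seq (x : R) (n : nat) : R :=
  INR (fact n) * Rpower (INR n) x / poch x n.

Definition is_Gamma_on_pos (g : R -> R) : Prop :=
  forall x, 0 < x -> Un_cv (Gamma_seq x) (g x).

(* f is completely monotonic on (0,oo): there is a sequence D of successive
   derivatives of f on (0,oo) with 0 <= (-1)^n D n x for all x > 0.
   (Finiteness is automatic for real-valued functions.) *)
Definition completely_monotonic_pos (f : R -> R) : Prop :=
  exists D : nat -> R -> R,
    (forall x, 0 < x -> D O x = f x) /\
    (forall n x, 0 < x -> derivable_pt_lim (D n) x (D (S n) x)) /\
    (forall n x, 0 < x -> 0 <= (-1) ^ n * D n x).

(* Main.v *)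
Require Import Defs.
From Stdlib Require Import Reals.
From Stdlib Require Import Arith Factorial Lra Lia Psatz ClassicalEpsilon Ranalysis5 FunctionalExtensionality List.
From Coquelicot Require Import Coquelicot.
Open Scope R_scope.

Definition limR (u : nat -> R) : R := epsilon (inhabits 0) (fun l => Un_cv u l).

Lemma limR_spec u l : Un_cv u l -> limR u = l.
Proof.
  intro H. unfold limR.
  assert (Hs : Un_cv u (epsilon (inhabits 0) (fun l => Un_cv u l))).
  { apply epsilon_spec. exists l; exact H. }
  exact (UL_sequence _ _ _ Hs H).
Qed.

Lemma ucauchy (u : nat -> R -> R) (P : R -> Prop) (e : nat -> R) :
  Un_cv e 0 ->
  (forall n m y, P y -> (n <= m)%nat -> Rabs (u m y - u n y) <= e n) ->
  forall y, P y ->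
    Un_cv (fun n => u n y) (limR (fun n => u n y)) /\
    forall n, Rabs (limR (fun n => u n y) - u n y) <= e n.
Proof.
  intros He Hb y Py.
  assert (Hc : Cauchy_crit (fun n => u n y)).
  { intros eps Heps.
    destruct (He (eps/2)) as [N HN]; [lra|].
    exists N. intros n m Hn Hm. unfold Rdist.
    assert (h1 := Hb N n y Py Hn). assert (h2 := Hb N m y Py Hm).
    assert (h3 := HN N (le_n N)). unfold Rdist in h3.
    rewrite Rminus_0_r in h3.
    apply Rabs_def2 in h3. destruct h3 as [h3 h4].
    assert (Rabs (u n y - u m y) <= Rabs (u n y - u N y) + Rabs (u m y - u N y)).
    { replace (u n y - u m y) with ((u n y - u N y) + - (u m y - u N y)) by ring.
      eapply Rle_trans; [apply Rabs_triang|]. rewrite Rabs_Ropp. lra. }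
    lra. }
  destruct (Rcomplete.R_complete _ Hc) as [l Hl].
  rewrite (limR_spec _ _ Hl). split; [exact Hl|].
  intro n. destruct (Rle_dec (Rabs (l - u n y)) (e n)) as [h|h]; [exact h|].
  exfalso. apply Rnot_le_lt in h.
  destruct (Hl (Rabs (l - u n y) - e n)) as [M HM]; [lra|].
  assert (h1 := HM (max M n) (Nat.le_max_l M n)). unfold Rdist in h1.
  assert (h2 := Hb n (max M n) y Py (Nat.le_max_r M n)).
  assert (Rabs (l - u n y) <= Rabs (u (max M n) y - l) + Rabs (u (max M n) y - u n y)).
  { replace (l - u n y) with (- (u (max M n) y - l) + (u (max M n) y - u n y)) by ring.
    eapply Rle_trans; [apply Rabs_triang|]. rewrite Rabs_Ropp. lra. }
  lra.
Qed.

Lemma deriv_lim (u u' : nat -> R -> R) (f : R -> R) (x r : R) (e : nat -> R) :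
  0 < r ->
  (forall n y, Rabs (y - x) < r -> derivable_pt_lim (u n) y (u' n y)) ->
  (forall n y, Rabs (y - x) < r -> continuity_pt (u' n) y) ->
  (forall y, Rabs (y - x) < r -> Un_cv (fun n => u n y) (f y)) ->
  Un_cv e 0 ->
  (forall n m y, Rabs (y - x) < r -> (n <= m)%nat -> Rabs (u' m y - u' n y) <= e n) ->
  derivable_pt_lim f x (limR (fun n => u' n x)).
Proof.
  intros hr hd hc hf he hb.
  set (rr := mkposreal r hr).
  set (g := fun y => limR (fun n => u' n y)).
  assert (HU := ucauchy u' (fun y => Rabs (y - x) < r) e he hb).
  assert (Hcvu : CVU u' g x rr).
  { intros eps Heps. destruct (he eps Heps) as [N HN]. exists N.
    intros n y Hn Hy. unfold Boule in Hy. simpl in Hy.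
    destruct (HU y Hy) as [_ H2]. specialize (H2 n).
    specialize (HN n Hn). unfold Rdist in HN. rewrite Rminus_0_r in HN.
    unfold g. apply Rle_lt_trans with (e n); [exact H2|].
    apply Rabs_def2 in HN. lra. }
  assert (Hcont : forall y, Boule x rr y -> continuity_pt g y).
  { apply (CVU_continuity u' g x rr Hcvu). intros n y Hy. apply hc. exact Hy. }
  change (derivable_pt_lim f x (g x)).
  apply (derivable_pt_lim_CVU u u' f g x x rr).
  - unfold Boule. simpl. rewrite Rminus_diag, Rabs_R0. exact hr.
  - intros y n Hy. apply hd. exact Hy.
  - intros y Hy. apply hf. exact Hy.
  - exact Hcvu.
  - exact Hcont.
Qed.


Definition CMs (D : nat -> R -> R) : Prop :=
  (forall n x, 0 < x -> derivable_pt_lim (D n) x (D (S n) x)) /\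
  (forall n x, 0 < x -> 0 <= (-1) ^ n * D n x).

Definition CMf (f : R -> R) : Prop := exists D, CMs D /\ forall x, 0 < x -> D O x = f x.

Lemma CMf_ext f g : CMf f -> (forall x, 0 < x -> f x = g x) -> CMf g.
Proof. intros [D [HD H0]] H. exists D. split; [exact HD|]. intros x hx. rewrite H0 by exact hx. apply H; exact hx. Qed.

Lemma CMf_plus f g : CMf f -> CMf g -> CMf (fun x => f x + g x).
Proof.
  intros [D [[HD1 HD2] H0]] [E [[HE1 HE2] H1]].
  exists (fun n x => D n x + E n x). split; [split|].
  - intros n x hx. apply (derivable_pt_lim_plus (D n) (E n)); auto.
  - intros n x hx. specialize (HD2 n x hx). specialize (HE2 n x hx). nra.
  - intros x hx. simpl. rewrite H0, H1 by exact hx. reflexivity.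
Qed.

Lemma CMf_scal c f : 0 <= c -> CMf f -> CMf (fun x => c * f x).
Proof.
  intros hc [D [[HD1 HD2] H0]].
  exists (fun n x => c * D n x). split; [split|].
  - intros n x hx. apply derivable_pt_lim_scal. auto.
  - intros n x hx. specialize (HD2 n x hx).
    replace ((-1) ^ n * (c * D n x)) with (c * ((-1) ^ n * D n x)) by ring.
    apply Rmult_le_pos; auto.
  - intros x hx. simpl. rewrite H0 by exact hx. reflexivity.
Qed.

Lemma CMf_shift f a : 0 <= a -> CMf f -> CMf (fun x => f (x + a)).
Proof.
  intros ha [D [[HD1 HD2] H0]].
  exists (fun n x => D n (x + a)). split; [split|].
  - intros n x hx.
    assert (H := derivable_pt_lim_comp (fun x => x + a) (D n) x 1 (D (S n) (x + a))).
    rewrite Rmult_1_r in H. apply H.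
    + replace 1 with (1 + 0) by ring. apply derivable_pt_lim_plus.
      apply derivable_pt_lim_id. apply derivable_pt_lim_const.
    + apply HD1. lra.
  - intros n x hx. apply HD2. lra.
  - intros x hx. apply H0. lra.
Qed.

Fixpoint PD (n : nat) (F G : nat -> R -> R) (x : R) : R :=
  match n with
  | O => F O x * G O x
  | S m => PD m (fun k => F (S k)) G x + PD m F (fun k => G (S k)) x
  end.

Lemma PD_deriv n : forall F G x,
  (forall k y, 0 < y -> derivable_pt_lim (F k) y (F (S k) y)) ->
  (forall k y, 0 < y -> derivable_pt_lim (G k) y (G (S k) y)) ->
  0 < x -> derivable_pt_lim (PD n F G) x (PD (S n) F G x).
Proof.
  induction n as [|n IH]; intros F G x hF hG hx.
  - simpl. exact (derivable_pt_lim_mult (F 0%nat) (G 0%nat) x _ _ (hF 0%nat x hx) (hG 0%nat x hx)).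
  - change (PD (S (S n)) F G x) with
      (PD (S n) (fun k => F (S k)) G x + PD (S n) F (fun k => G (S k)) x).
    change (PD (S n) F G) with (fun x => PD n (fun k => F (S k)) G x + PD n F (fun k => G (S k)) x).
    apply (derivable_pt_lim_plus (PD n (fun k => F (S k)) G) (PD n F (fun k => G (S k)))).
    + apply IH; auto.
    + apply IH; auto.
Qed.

Lemma PD_opp n : forall F G x, PD n (fun k y => - F k y) G x = - PD n F G x.
Proof.
  induction n as [|n IH]; intros F G x; simpl.
  - ring.
  - rewrite (IH (fun k => F (S k))). rewrite IH. ring.
Qed.

Lemma PD_opp2 n : forall F G x, PD n F (fun k y => - G k y) x = - PD n F G x.
Proof.
  induction n as [|n IH]; intros F G x; simpl.
  - ring.
  - rewrite IH. rewrite (IH F (fun k => G (S k))). ring.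
Qed.

Lemma PD_sign n : forall F G x,
  (forall k, 0 <= (-1) ^ k * F k x) -> (forall k, 0 <= (-1) ^ k * G k x) ->
  0 <= (-1) ^ n * PD n F G x.
Proof.
  induction n as [|n IH]; intros F G x hF hG.
  - simpl. specialize (hF 0%nat). specialize (hG 0%nat). simpl in *. nra.
  - simpl.
    assert (E1 : PD n (fun k => F (S k)) G x = - PD n (fun k y => - F (S k) y) G x).
    { rewrite (PD_opp n (fun k => F (S k)) G x). ring. }
    assert (E2 : PD n F (fun k => G (S k)) x = - PD n F (fun k y => - G (S k) y) x).
    { rewrite (PD_opp2 n F (fun k => G (S k)) x). ring. }
    rewrite E1, E2.
    assert (A1 : 0 <= (-1) ^ n * PD n (fun k y => - F (S k) y) G x).
    { apply IH; auto. intro k. specialize (hF (S k)). simpl in hF. nra. }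
    assert (A2 : 0 <= (-1) ^ n * PD n F (fun k y => - G (S k) y) x).
    { apply IH; auto. intro k. specialize (hG (S k)). simpl in hG. nra. }
    nra.
Qed.

Lemma CMf_mult f g : CMf f -> CMf g -> CMf (fun x => f x * g x).
Proof.
  intros [D [[HD1 HD2] H0]] [E [[HE1 HE2] H1]].
  exists (fun n x => PD n D E x). split; [split|].
  - intros n x hx. apply PD_deriv; auto.
  - intros n x hx. apply PD_sign; intro k; auto.
  - intros x hx. simpl. rewrite H0, H1 by exact hx. reflexivity.
Qed.


Lemma pow_m1_sq n : (-1) ^ n * (-1) ^ n = 1.
Proof. rewrite <- Rpow_mult_distr. replace (-1 * -1) with 1 by ring. apply pow1. Qed.

Lemma Rabs_pow_m1 n : Rabs ((-1) ^ n) = 1.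
Proof. rewrite <- RPow_abs. replace (Rabs (-1)) with 1 by (unfold Rabs; destruct Rcase_abs; lra). apply pow1. Qed.

Lemma abs_sign n v : 0 <= (-1) ^ n * v -> Rabs v = (-1) ^ n * v.
Proof.
  intro h. rewrite <- (Rabs_pos_eq _ h). rewrite Rabs_mult, Rabs_pow_m1. ring.
Qed.

Lemma CM_mono D n a y : CMs D -> 0 < a -> a <= y -> (-1) ^ n * D n y <= (-1) ^ n * D n a.
Proof.
  intros [H1 H2] ha hay. destruct (Req_dec a y) as [->|hne]; [lra|].
  assert (hlt : a < y) by lra.
  destruct (MVT_cor2 (fun z => (-1) ^ n * D n z) (fun z => (-1) ^ n * D (S n) z) a y hlt)
    as [c [Hc1 Hc2]].
  { intros c hc. apply derivable_pt_lim_scal. apply H1. lra. }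
  assert (hs := H2 (S n) c ltac:(lra)). simpl in hs.
  assert (0 <= (-1) ^ n * D n a - (-1) ^ n * D n y).
  { replace ((-1) ^ n * D n a - (-1) ^ n * D n y) with (- ((-1) ^ n * D (S n) c * (y - a))) by lra.
    nra. }
  lra.
Qed.

Lemma CM_step D n y : CMs D -> 0 < y ->
  (-1) ^ (S n) * D (S n) y <= 2 / y * ((-1) ^ n * D n (y / 2)).
Proof.
  intros HD hy. destruct HD as [H1 H2].
  destruct (MVT_cor2 (fun z => (-1) ^ n * D n z) (fun z => (-1) ^ n * D (S n) z) (y/2) y ltac:(lra))
    as [c [Hc1 Hc2]].
  { intros c hc. apply derivable_pt_lim_scal. apply H1. lra. }
  assert (hm := CM_mono D (S n) c y (conj H1 H2) ltac:(lra) ltac:(lra)).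
  assert (h0 := H2 n y hy).
  simpl in hm, Hc1 |- *.
  assert (e : 2 / y * ((-1) ^ n * D n (y / 2))
     = 2 / y * ((-1) ^ n * D n y) + 2 / y * (- ((-1) ^ n * D (S n) c * (y - y/2)))).
  { rewrite <- Hc1. field. lra. }
  rewrite e.
  assert (0 <= 2 / y * ((-1) ^ n * D n y)).
  { apply Rmult_le_pos; [|exact h0]. unfold Rdiv. apply Rmult_le_pos; [lra|]. left. apply Rinv_0_lt_compat. lra. }
  assert (2 / y * (- ((-1) ^ n * D (S n) c * (y - y / 2))) = -1 * (-1) ^ n * D (S n) c).
  { field. lra. }
  lra.
Qed.

Fixpoint Bc (n : nat) (y : R) : R :=
  match n with O => 1 | S m => 2 / y * Bc m (y / 2) end.

Lemma Bc_pos n : forall y, 0 < y -> 0 < Bc n y.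
Proof.
  induction n as [|n IH]; intros y hy; simpl; [lra|].
  apply Rmult_lt_0_compat.
  - unfold Rdiv. apply Rmult_lt_0_compat; [lra|]. apply Rinv_0_lt_compat; lra.
  - apply IH. lra.
Qed.

Lemma CM_bound D n : CMs D -> forall y, 0 < y -> (-1) ^ n * D n y <= Bc n y * D O (y / 2 ^ n).
Proof.
  intro HD. induction n as [|n IH]; intros y hy.
  - simpl. replace (y / 1) with y by field. lra.
  - eapply Rle_trans; [apply CM_step; auto|].
    simpl Bc. specialize (IH (y/2) ltac:(lra)).
    assert (h2n : 2 ^ n > 0) by (apply pow_lt; lra).
    replace (y / 2 / 2 ^ n) with (y / 2 ^ S n) in IH by (simpl; field; repeat split; lra).
    assert (0 <= 2 / y). { unfold Rdiv. apply Rmult_le_pos; [lra|]. left. apply Rinv_0_lt_compat; lra. }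
    rewrite Rmult_assoc. apply Rmult_le_compat_l; auto.
Qed.

Lemma sum_diff (f g : nat -> R) N d : (forall k, Rabs (f k) <= g k) ->
  Rabs (sum_f_R0 f (N + d) - sum_f_R0 f N) <= sum_f_R0 g (N + d) - sum_f_R0 g N.
Proof.
  intro H. induction d as [|d IH].
  - rewrite Nat.add_0_r. rewrite Rminus_diag, Rabs_R0. lra.
  - rewrite Nat.add_succ_r. simpl.
    replace (sum_f_R0 f (N + d) + f (S (N + d)) - sum_f_R0 f N) with
      ((sum_f_R0 f (N + d) - sum_f_R0 f N) + f (S (N + d))) by ring.
    eapply Rle_trans; [apply Rabs_triang|]. specialize (H (S (N + d))). lra.
Qed.

Lemma sum_diff' (f g : nat -> R) N M : (N <= M)%nat -> (forall k, Rabs (f k) <= g k) ->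
  Rabs (sum_f_R0 f M - sum_f_R0 f N) <= sum_f_R0 g M - sum_f_R0 g N.
Proof.
  intros hNM H. replace M with (N + (M - N))%nat by lia. apply sum_diff; auto.
Qed.

Lemma sum_deriv (F F' : nat -> R -> R) y N :
  (forall k, derivable_pt_lim (F k) y (F' k y)) ->
  derivable_pt_lim (fun z => sum_f_R0 (fun k => F k z) N) y (sum_f_R0 (fun k => F' k y) N).
Proof.
  intro H. induction N as [|N IH]; simpl.
  - apply H.
  - apply (derivable_pt_lim_plus (fun z => sum_f_R0 (fun k => F k z) N) (F (S N))); auto.
Qed.

Lemma scal_sum_l (f : nat -> R) c N : sum_f_R0 (fun k => c * f k) N = c * sum_f_R0 f N.
Proof. rewrite scal_sum. apply sum_eq. intros. ring. Qed.

Lemma cv_nonneg (u : nat -> R) l c : Un_cv u l -> (forall N, 0 <= c * u N) -> 0 <= c * l.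
Proof.
  intros H h.
  apply (@Rle_cv_lim (fun _ => 0) (fun N => c * u N)); auto.
  - intros eps heps. exists O. intros. unfold Rdist. rewrite Rminus_diag, Rabs_R0. exact heps.
  - apply (CV_mult (fun _ => c) u). intros eps heps. exists O. intros. unfold Rdist. rewrite Rminus_diag, Rabs_R0. exact heps.
    exact H.
Qed.

Section Series.
Variable Dk : nat -> nat -> R -> R.
Hypothesis HDk : forall k, CMs (Dk k).
Hypothesis Hsum : forall y, 0 < y -> exists l, Un_cv (fun N => sum_f_R0 (fun k => Dk k O y) N) l.

Let psum n y N := sum_f_R0 (fun k => Dk k n y) N.

Lemma series_unif n x : 0 < x -> exists e : nat -> R, Un_cv e 0 /\
  forall N M y, Rabs (y - x) < x / 2 -> (N <= M)%nat -> Rabs (psum n y M - psum n y N) <= e N.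
Proof.
  intro hx. set (a := x / 2). set (z := a / 2 ^ n).
  assert (ha : 0 < a) by (unfold a; lra).
  assert (hz : 0 < z) by (unfold z; unfold Rdiv; apply Rmult_lt_0_compat; auto; apply Rinv_0_lt_compat, pow_lt; lra).
  destruct (Hsum z hz) as [Sl HS].
  exists (fun N => Bc n a * (Sl - psum O z N)). split.
  - replace 0 with (Bc n a * 0) by ring.
    apply (CV_mult (fun _ => Bc n a) (fun N => Sl - psum O z N)).
    + intros eps heps. exists O. intros. unfold Rdist. rewrite Rminus_diag, Rabs_R0. exact heps.
    + intros eps heps. destruct (HS eps heps) as [N HN]. exists N. intros m hm.
      specialize (HN m hm). unfold Rdist in *. unfold psum.
      replace (Sl - sum_f_R0 (fun k => Dk k 0%nat z) m - 0) with (- (sum_f_R0 (fun k => Dk k 0%nat z) m - Sl)) by ring.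
      rewrite Rabs_Ropp. exact HN.
  - intros N M y hy hNM.
    assert (hay : a <= y). { apply Rabs_def2 in hy. unfold a in *. lra. }
    eapply Rle_trans.
    { apply (sum_diff' (fun k => Dk k n y) (fun k => Bc n a * Dk k O z) N M hNM).
      intro k. destruct (HDk k) as [H1 H2].
      rewrite (abs_sign n); [|apply H2; lra].
      eapply Rle_trans; [apply (CM_mono (Dk k) n a y (HDk k) ha hay)|].
      apply CM_bound; auto. }
    assert (Hg : Un_growing (psum O z)).
    { intro m. unfold psum. simpl. destruct (HDk (S m)) as [_ H2]. specialize (H2 O z hz). simpl in H2. lra. }
    assert (hM := growing_ineq _ _ Hg HS M).
    assert (hb := Bc_pos n a ha).
    rewrite !scal_sum_l. unfold psum in *. nra.
Qed.

Lemma series_cv n y : 0 < y -> Un_cv (fun N => psum n y N) (limR (fun N => psum n y N)).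
Proof.
  intro hy. destruct (series_unif n y hy) as [e [He Hb]].
  apply (ucauchy (fun N y => psum n y N) (fun y' => Rabs (y' - y) < y / 2) e He).
  - intros. apply Hb; auto.
  - rewrite Rminus_diag, Rabs_R0. lra.
Qed.

Lemma CMs_series : CMs (fun n y => limR (fun N => psum n y N)).
Proof.
  split.
  - intros n x hx. destruct (series_unif (S n) x hx) as [e [He Hb]].
    apply (deriv_lim (fun N y => psum n y N) (fun N y => psum (S n) y N) _ x (x/2) e).
    + lra.
    + intros N y hy. apply (sum_deriv (fun k => Dk k n) (fun k => Dk k (S n))).
      intro k. apply (HDk k). apply Rabs_def2 in hy. lra.
    + intros N y hy. apply derivable_continuous_pt.
      exists (psum (S (S n)) y N). apply (sum_deriv (fun k => Dk k (S n)) (fun k => Dk k (S (S n)))).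
      intro k. apply (HDk k). apply Rabs_def2 in hy. lra.
    + intros y hy. apply series_cv. apply Rabs_def2 in hy. lra.
    + exact He.
    + intros. apply Hb; auto.
  - intros n x hx. apply (cv_nonneg (fun N => psum n x N)).
    + apply series_cv; auto.
    + intro N. unfold psum. rewrite scal_sum.
      apply cond_pos_sum. intro k. rewrite Rmult_comm. apply (HDk k). exact hx.
Qed.
End Series.

Lemma CMf_series (F : nat -> R -> R) :
  (forall k, CMf (F k)) ->
  (forall y, 0 < y -> exists l, Un_cv (fun N => sum_f_R0 (fun k => F k y) N) l) ->
  CMf (fun y => limR (fun N => sum_f_R0 (fun k => F k y) N)).
Proof.
  intros HF Hs.
  set (Dk := fun k => epsilon (inhabits (fun (_ : nat) (_ : R) => 0))
                        (fun D => CMs D /\ forall x, 0 < x -> D O x = F k x)).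
  assert (HDk : forall k, CMs (Dk k) /\ forall x, 0 < x -> Dk k O x = F k x).
  { intro k. unfold Dk. apply epsilon_spec. apply HF. }
  assert (Heq : forall y, 0 < y -> forall N,
     sum_f_R0 (fun k => Dk k O y) N = sum_f_R0 (fun k => F k y) N).
  { intros y hy N. apply sum_eq. intros. apply HDk. exact hy. }
  exists (fun n y => limR (fun N => sum_f_R0 (fun k => Dk k n y) N)). split.
  - apply CMs_series.
    + intro k. apply HDk.
    + intros y hy. destruct (Hs y hy) as [l Hl]. exists l.
      intros eps he. destruct (Hl eps he) as [N HN]. exists N. intros. rewrite Heq; auto.
  - intros x hx. f_equal. apply functional_extensionality. intro N. apply Heq. exact hx.
Qed.


Ltac fs := field; repeat split; try lra; try (apply pow_nonzero; lra).

Lemma exp_pow_ge m u : 0 <= u -> u ^ m <= exp (INR m * u).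
Proof.
  intro hu. induction m as [|m IH].
  - simpl. rewrite Rmult_0_l, exp_0. lra.
  - rewrite S_INR. replace ((INR m + 1) * u) with (INR m * u + u) by ring.
    rewrite exp_plus. simpl.
    assert (h1 := exp_ineq1_le u). assert (0 <= u ^ m) by (apply pow_le; lra).
    rewrite Rmult_comm. apply Rmult_le_compat; lra.
Qed.

Lemma texp_bound j b T : 0 < b -> 0 < T ->
  T ^ j * exp (- (b * T)) <= (INR (S j)) ^ (S j) / (b ^ (S j)) / T.
Proof.
  intros hb hT.
  set (m := INR (S j)).
  assert (hm : 0 < m) by (unfold m; apply lt_0_INR; lia).
  assert (H := exp_pow_ge (S j) (b * T / m) ltac:(apply Rmult_le_pos; [nra| left; apply Rinv_0_lt_compat; lra])).
  fold m in H. replace (m * (b * T / m)) with (b * T) in H by (field; lra).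
  rewrite exp_Ropp.
  assert (he : 0 < exp (b * T)) by apply exp_pos.
  assert (hbT : 0 < (b * T / m) ^ S j) by (apply pow_lt; unfold Rdiv; apply Rmult_lt_0_compat; [nra|apply Rinv_0_lt_compat; lra]).
  replace (m ^ S j / b ^ S j / T) with (T ^ j * / ((b * T / m) ^ S j)).
  2:{ unfold Rdiv. rewrite !Rpow_mult_distr. rewrite !pow_inv. simpl. field.
      repeat split; try lra; try (apply pow_nonzero; lra). }
  apply Rmult_le_compat_l; [apply pow_le; lra|].
  apply Rinv_le_contravar; lra.
Qed.

Fixpoint Rk (k : nat) (b T : R) : R :=
  match k with
  | O => exp (- (b * T)) / b
  | S j => (INR (S j) * Rk j b T + T ^ (S j) * exp (- (b * T))) / b
  end.

Lemma Rk_0 k b : 0 < b -> Rk k b 0 = INR (fact k) / b ^ (S k).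
Proof.
  intro hb. induction k as [|k IH]; simpl Rk.
  - rewrite Rmult_0_r, Ropp_0, exp_0. simpl. fs.
  - rewrite IH. rewrite Rmult_0_r, Ropp_0, exp_0. rewrite fact_simpl, mult_INR.
    simpl. fs.
Qed.

Lemma Rk_deriv k b T : 0 < b -> is_derive (Rk k b) T (- (T ^ k * exp (- (b * T)))).
Proof.
  intro hb. induction k as [|k IH].
  - simpl Rk. auto_derive; [exact I|]. simpl. field. lra.
  - change (Rk (S k) b) with (fun T => (INR (S k) * Rk k b T + T ^ (S k) * exp (- (b * T))) / b).
    auto_derive.
    + exists (- (T ^ k * exp (- (b * T)))). exact IH.
    + replace (Derive (fun x => Rk k b x) T) with (- (T ^ k * exp (- (b * T)))).
      2:{ symmetry. apply is_derive_unique. exact IH. }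
      destruct k; simpl; try rewrite S_INR; fs.
Qed.

Lemma Rk_nonneg k b T : 0 < b -> 0 <= T -> 0 <= Rk k b T.
Proof.
  intros hb hT. induction k as [|k IH].
  - simpl Rk. unfold Rdiv. apply Rmult_le_pos; [left; apply exp_pos|left; apply Rinv_0_lt_compat; lra].
  - change (Rk (S k) b T) with ((INR (S k) * Rk k b T + T ^ (S k) * exp (- (b * T))) / b).
    unfold Rdiv. apply Rmult_le_pos; [|left; apply Rinv_0_lt_compat; lra].
    apply Rplus_le_le_0_compat.
    + apply Rmult_le_pos; auto. apply pos_INR.
    + apply Rmult_le_pos; [apply pow_le; lra|left; apply exp_pos].
Qed.

Lemma Rk_small k b : 0 < b -> exists M, forall T, 0 < T -> Rk k b T <= M / T.
Proof.
  intro hb. induction k as [|k [M IH]].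
  - exists (INR 1 ^ 1 / b ^ 1 / b). intros T hT. simpl Rk.
    assert (H := texp_bound 0 b T hb hT). simpl in H |- *.
    unfold Rdiv in *. replace (exp (- (b * T)) * / b) with ((1 * exp (- (b * T))) * / b) by ring.
    replace (1 * 1 * / (b * 1) * / b * / T) with ((1 * 1 * / (b * 1) * / T) * / b) by ring.
    apply Rmult_le_compat_r; [left; apply Rinv_0_lt_compat; lra|]. lra.
  - exists ((INR (S k) * M + INR (S (S k)) ^ (S (S k)) / b ^ (S (S k))) / b).
    intros T hT. change (Rk (S k) b T) with ((INR (S k) * Rk k b T + T ^ (S k) * exp (- (b * T))) / b).
    assert (H := texp_bound (S k) b T hb hT). specialize (IH T hT).
    assert (hk : 0 <= INR (S k)) by apply pos_INR.
    replace ((INR (S k) * M + INR (S (S k)) ^ S (S k) / b ^ S (S k)) / b / T) with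
      ((INR (S k) * (M / T) + INR (S (S k)) ^ S (S k) / b ^ S (S k) / T) / b) by fs.
    unfold Rdiv in *.
    apply Rmult_le_compat_r; [left; apply Rinv_0_lt_compat; lra|].
    apply Rplus_le_compat; [|exact H].
    apply Rmult_le_compat_l; auto.
Qed.

Definition term := (R * nat * R)%type.

Fixpoint lapf (L : list term) (x : R) : R :=
  match L with
  | nil => 0
  | (c, k, b) :: L' => c * INR (fact k) / (x + b) ^ (S k) + lapf L' x
  end.

Fixpoint kern (L : list term) (t : R) : R :=
  match L with
  | nil => 0
  | (c, k, b) :: L' => c * t ^ k * exp (- (b * t)) + kern L' t
  end.

Fixpoint HH (L : list term) (T : R) : R :=
  match L with
  | nil => 0
  | (c, k, b) :: L' => c * Rk k b T + HH L' T
  end.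

Definition bpos (L : list term) := forall c k b, In (c, k, b) L -> 0 < b.

Lemma bpos_cons c k b L : bpos ((c, k, b) :: L) -> 0 < b /\ bpos L.
Proof.
  intro H. split.
  - apply (H c k b). left. reflexivity.
  - intros c' k' b' h. apply (H c' k' b'). right. exact h.
Qed.

Lemma HH_0 L : bpos L -> HH L 0 = lapf L 0.
Proof.
  induction L as [|[[c k] b] L IH]; intro hL; simpl; [reflexivity|].
  apply bpos_cons in hL. destruct hL as [hb hL].
  rewrite IH by exact hL. rewrite Rk_0 by exact hb. rewrite Rplus_0_l. f_equal. simpl. field.
  repeat split; try lra; try (apply pow_nonzero; lra).
Qed.

Lemma HH_deriv L T : bpos L -> is_derive (HH L) T (- kern L T).
Proof.
  induction L as [|[[c k] b] L IH]; intro hL; simpl.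
  - auto_derive; [exact I|ring].
  - apply bpos_cons in hL. destruct hL as [hb hL].
    change (HH ((c, k, b) :: L)) with (fun T => c * Rk k b T + HH L T).
    assert (H1 := Rk_deriv k b T hb). assert (H2 := IH hL).
    auto_derive.
    + split; [exists (- (T ^ k * exp (- (b * T)))); exact H1|].
      split; [exists (- kern L T); exact H2|exact I].
    + replace (Derive (fun x => Rk k b x) T) with (- (T ^ k * exp (- (b * T))))
        by (symmetry; apply is_derive_unique; exact H1).
      replace (Derive (fun x => HH L x) T) with (- kern L T)
        by (symmetry; apply is_derive_unique; exact H2).
      ring.
Qed.

Lemma HH_small L : bpos L -> exists M, forall T, 0 < T -> - (M / T) <= HH L T.
Proof.
  induction L as [|[[c k] b] L IH]; intro hL; simpl.
  - exists 0. intros. unfold Rdiv. lra.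
  - apply bpos_cons in hL. destruct hL as [hb hL].
    destruct (IH hL) as [M1 H1]. destruct (Rk_small k b hb) as [M2 H2].
    exists (Rabs c * M2 + M1). intros T hT.
    specialize (H1 T hT). specialize (H2 T hT).
    assert (h0 := Rk_nonneg k b T hb ltac:(lra)).
    assert (c * Rk k b T >= - (Rabs c * (M2 / T))).
    { destruct (Rle_dec 0 c).
      - rewrite Rabs_pos_eq by lra. assert (0 <= c * Rk k b T) by nra.
        assert (0 <= M2 / T) by lra. nra.
      - rewrite Rabs_left by lra. nra. }
    replace ((Rabs c * M2 + M1) / T) with (Rabs c * (M2 / T) + M1 / T) by (field; lra).
    lra.
Qed.

Lemma lap_core L : bpos L -> (forall t, 0 < t -> 0 <= kern L t) -> 0 <= lapf L 0.
Proof.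
  intros hL hk. rewrite <- HH_0 by exact hL.
  destruct (HH_small L hL) as [M HM].
  assert (Hdec : forall T, 0 < T -> HH L T <= HH L 0).
  { intros T hT.
    destruct (MVT_cor2 (HH L) (fun t => - kern L t) 0 T hT) as [c [Hc1 Hc2]].
    { intros c hc. apply is_derive_Reals. apply HH_deriv. exact hL. }
    specialize (hk c ltac:(lra)). nra. }
  destruct (Rle_dec 0 (HH L 0)) as [h|h]; [exact h|exfalso].
  apply Rnot_le_lt in h.
  set (T := (Rabs M + 1) * 2 / (- HH L 0)).
  assert (hT : 0 < T).
  { unfold T. unfold Rdiv. apply Rmult_lt_0_compat; [assert (0 <= Rabs M) by apply Rabs_pos; lra|].
    apply Rinv_0_lt_compat. lra. }
  specialize (HM T hT). specialize (Hdec T hT).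
  assert (M / T <= Rabs M / T).
  { unfold Rdiv. apply Rmult_le_compat_r; [left; apply Rinv_0_lt_compat; lra|apply Rle_abs]. }
  assert (Rabs M / T = Rabs M * (- HH L 0) / ((Rabs M + 1) * 2)).
  { unfold T. field. assert (0 <= Rabs M) by apply Rabs_pos. lra. }
  assert (0 <= Rabs M) by apply Rabs_pos.
  assert (Rabs M * - HH L 0 / ((Rabs M + 1) * 2) < - HH L 0).
  { apply (Rmult_lt_reg_r ((Rabs M + 1) * 2)); [lra|].
    unfold Rdiv. rewrite Rmult_assoc, Rinv_l by lra. nra. }
  lra.
Qed.


Definition lsh (n : nat) (L : list term) : list term :=
  map (fun p => let '(c, k, b) := p in (c, (k + n)%nat, b)) L.
Definition lsx (n : nat) (x : R) (L : list term) : list term :=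
  map (fun p => let '(c, k, b) := p in (c, (k + n)%nat, b + x)) L.
Definition bnn (L : list term) := forall c k b, In (c, k, b) L -> 0 <= b.

Lemma bnn_cons c k b L : bnn ((c, k, b) :: L) -> 0 <= b /\ bnn L.
Proof.
  intro H. split.
  - apply (H c k b). left. reflexivity.
  - intros c' k' b' h. apply (H c' k' b'). right. exact h.
Qed.

Lemma term_deriv c k b x : 0 < x + b ->
  is_derive (fun x => c * INR (fact k) / (x + b) ^ (S k)) x
    (- (c * INR (fact (S k)) / (x + b) ^ (S (S k)))).
Proof.
  intro h. assert (hk : 0 < (x + b) ^ k) by (apply pow_lt; lra).
  auto_derive.
  - nra.
  - change (match k with O => 1 | S _ => INR k + 1 end) with (INR (S k)). rewrite fact_simpl, mult_INR. rewrite <- !tech_pow_Rmult. field. nra.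
Qed.

Lemma lapf_deriv L n x : bnn L -> 0 < x ->
  is_derive (lapf (lsh n L)) x (- lapf (lsh (S n) L) x).
Proof.
  induction L as [|[[c k] b] L IH]; intros hL hx.
  - simpl. auto_derive; [exact I|ring].
  - apply bnn_cons in hL. destruct hL as [hb hL].
    change (lapf (lsh n ((c, k, b) :: L))) with
      (fun x => c * INR (fact (k + n)) / (x + b) ^ (S (k + n)) + lapf (lsh n L) x).
    change (lapf (lsh (S n) ((c, k, b) :: L)) x) with
      (c * INR (fact (k + S n)) / (x + b) ^ (S (k + S n)) + lapf (lsh (S n) L) x).
    rewrite Nat.add_succ_r.
    replace (- (c * INR (fact (S (k + n))) / (x + b) ^ S (S (k + n)) + lapf (lsh (S n) L) x))
      with (- (c * INR (fact (S (k + n))) / (x + b) ^ S (S (k + n))) + - lapf (lsh (S n) L) x) by ring.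
    apply (is_derive_plus (fun x => c * INR (fact (k + n)) / (x + b) ^ (S (k + n))) (lapf (lsh n L))).
    + apply (term_deriv c (k + n) b x). lra.
    + apply IH; auto.
Qed.

Lemma lapf_lsx L n x : lapf (lsh n L) x = lapf (lsx n x L) 0.
Proof.
  induction L as [|[[c k] b] L IH]; simpl; [reflexivity|].
  rewrite IH. rewrite Rplus_0_l. rewrite (Rplus_comm b x). reflexivity.
Qed.

Lemma kern_lsx L n x t : kern (lsx n x L) t = t ^ n * exp (- (x * t)) * kern L t.
Proof.
  induction L as [|[[c k] b] L IH]; simpl; [ring|].
  rewrite IH. rewrite pow_add.
  replace (- ((b + x) * t)) with (- (b * t) + - (x * t)) by ring. rewrite exp_plus. ring.
Qed.

Lemma bpos_lsx L n x : bnn L -> 0 < x -> bpos (lsx n x L).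
Proof.
  induction L as [|[[c k] b] L IH]; intros hL hx.
  - intros c k b h. inversion h.
  - apply bnn_cons in hL. destruct hL as [hb hL].
    intros c' k' b' h. simpl in h. destruct h as [h|h].
    + inversion h. lra.
    + exact (IH hL hx c' k' b' h).
Qed.

Lemma lapf_lsh0 L x : lapf (lsh 0 L) x = lapf L x.
Proof.
  induction L as [|[[c k] b] L IH]; simpl; [reflexivity|]. rewrite IH, Nat.add_0_r. reflexivity.
Qed.

Lemma CMf_lap L : bnn L -> (forall t, 0 < t -> 0 <= kern L t) -> CMf (lapf L).
Proof.
  intros hL hk.
  exists (fun n x => (-1) ^ n * lapf (lsh n L) x). split; [split|].
  - intros n x hx. apply is_derive_Reals.
    replace ((-1) ^ S n * lapf (lsh (S n) L) x) with ((-1) ^ n * (- lapf (lsh (S n) L) x)) by (simpl; ring).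
    apply (is_derive_scal (lapf (lsh n L))). apply lapf_deriv; auto.
  - intros n x hx. rewrite <- Rmult_assoc, pow_m1_sq, Rmult_1_l.
    rewrite lapf_lsx. apply lap_core.
    + apply bpos_lsx; auto.
    + intros t ht. rewrite kern_lsx. apply Rmult_le_pos; [|apply hk; exact ht].
      apply Rmult_le_pos; [apply pow_le; lra|left; apply exp_pos].
  - intros x hx. simpl. rewrite Rmult_1_l. apply lapf_lsh0.
Qed.


Lemma chain (f f' : R -> R) : 0 <= f 0 ->
  (forall t, 0 <= t -> is_derive f t (f' t)) -> (forall t, 0 <= t -> 0 <= f' t) ->
  forall t, 0 <= t -> 0 <= f t.
Proof.
  intros h0 hd hp t ht. destruct (Req_dec t 0) as [->|hne]; [exact h0|].
  destruct (MVT_cor2 f f' 0 t ltac:(lra)) as [c [Hc1 Hc2]].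
  { intros c hc. apply is_derive_Reals. apply hd. lra. }
  specialize (hp c ltac:(lra)). nra.
Qed.

Definition ph0 (t : R) : R := exp (2*t) * ((-43/6) + (9/2)*t + (-1)*t^2 + (1/12)*t^3) + exp t * ((40/3) + (-4/3)*t + (1)*t^2 + (-1/12)*t^3) + ((-37/6) + (-13/6)*t).
Definition ph1 (t : R) : R := exp (2*t) * ((-59/6) + (7)*t + (-7/4)*t^2 + (1/6)*t^3) + exp t * ((12) + (2/3)*t + (3/4)*t^2 + (-1/12)*t^3) + ((-13/6)).
Definition ph2 (t : R) : R := exp (2*t) * ((-38/3) + (21/2)*t + (-3)*t^2 + (1/3)*t^3) + exp t * ((38/3) + (13/6)*t + (1/2)*t^2 + (-1/12)*t^3).
Definition ph3 (t : R) : R := exp (2*t) * ((-89/6) + (15)*t + (-5)*t^2 + (2/3)*t^3) + exp t * ((89/6) + (19/6)*t + (1/4)*t^2 + (-1/12)*t^3).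
Definition ph4 (t : R) : R := exp (2*t) * ((-44/3) + (20)*t + (-8)*t^2 + (4/3)*t^3) + exp t * ((18) + (11/3)*t + (-1/12)*t^3).
Definition hh0 (t : R) : R := exp t * ((-44/3) + (20)*t + (-8)*t^2 + (4/3)*t^3) + ((18) + (11/3)*t + (-1/12)*t^3).
Definition hh1 (t : R) : R := exp t * ((16/3) + (4)*t + (-4)*t^2 + (4/3)*t^3) + ((11/3) + (-1/4)*t^2).
Definition hh2 (t : R) : R := exp t * ((28/3) + (-4)*t + (4/3)*t^3) + ((-1/2)*t).
Definition hh3 (t : R) : R := exp t * ((16/3) + (-4)*t + (4)*t^2 + (4/3)*t^3) + ((-1/2)).
Definition hh4 (t : R) : R := exp t * ((4/3) + (4)*t + (8)*t^2 + (4/3)*t^3).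

Lemma hh4_nn t : 0 <= t -> 0 <= hh4 t.
Proof. intro ht. unfold hh4. apply Rmult_le_pos; [left; apply exp_pos|]. nra. Qed.

Ltac dchain := intros t ht; auto_derive; try exact I; try field.

Lemma ph_nn : forall t, 0 <= t -> 0 <= ph0 t.
Proof.
  assert (E := exp_0).
  assert (E2 : exp (2 * 0) = 1) by (rewrite Rmult_0_r; exact exp_0).
  assert (H3 : forall t, 0 <= t -> 0 <= hh3 t).
  { apply (chain hh3 hh4); [unfold hh3; rewrite E; lra| |exact hh4_nn].
    unfold hh3, hh4. dchain. }
  assert (H2 : forall t, 0 <= t -> 0 <= hh2 t).
  { apply (chain hh2 hh3); [unfold hh2; rewrite E; lra| |exact H3].
    unfold hh2, hh3. dchain. }
  assert (H1 : forall t, 0 <= t -> 0 <= hh1 t).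
  { apply (chain hh1 hh2); [unfold hh1; rewrite E; lra| |exact H2].
    unfold hh1, hh2. dchain. }
  assert (H0 : forall t, 0 <= t -> 0 <= hh0 t).
  { apply (chain hh0 hh1); [unfold hh0; rewrite E; lra| |exact H1].
    unfold hh0, hh1. dchain. }
  assert (G4 : forall t, 0 <= t -> 0 <= ph4 t).
  { intros t ht. replace (ph4 t) with (exp t * hh0 t).
    - apply Rmult_le_pos; [left; apply exp_pos|auto].
    - unfold ph4, hh0. replace (2 * t) with (t + t) by ring. rewrite exp_plus. ring. }
  assert (G3 : forall t, 0 <= t -> 0 <= ph3 t).
  { apply (chain ph3 ph4); [unfold ph3; rewrite E, E2; lra| |exact G4].
    unfold ph3, ph4. dchain. }
  assert (G2 : forall t, 0 <= t -> 0 <= ph2 t).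
  { apply (chain ph2 ph3); [unfold ph2; rewrite E, E2; lra| |exact G3].
    unfold ph2, ph3. dchain. }
  assert (G1 : forall t, 0 <= t -> 0 <= ph1 t).
  { apply (chain ph1 ph2); [unfold ph1; rewrite E, E2; lra| |exact G2].
    unfold ph1, ph2. dchain. }
  apply (chain ph0 ph1); [unfold ph0; rewrite E, E2; lra| |exact G1].
  unfold ph0, ph1. dchain.
Qed.

Definition Lk : list term :=
  (1/12, 3%nat, 1) :: (-1, 2%nat, 1) :: (9/2, 1%nat, 1) :: (-43/6, 0%nat, 1) ::
  (-1/12, 3%nat, 2) :: (1, 2%nat, 2) :: (-4/3, 1%nat, 2) :: (40/3, 0%nat, 2) ::
  (-13/6, 1%nat, 3) :: (-37/6, 0%nat, 3) :: nil.

Lemma kern_Lk t : kern Lk t = exp (- (3 * t)) * ph0 t.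
Proof.
  unfold Lk, kern, ph0.
  assert (e1 : exp (- (1 * t)) = exp (- (3 * t)) * exp (2 * t)).
  { rewrite <- exp_plus. f_equal. ring. }
  assert (e2 : exp (- (2 * t)) = exp (- (3 * t)) * exp t).
  { rewrite <- exp_plus. f_equal. ring. }
  rewrite e1, e2. ring.
Qed.

Lemma CMf_Lk : CMf (lapf Lk).
Proof.
  apply CMf_lap.
  - intros c k b h. unfold Lk in h. simpl in h.
    repeat (destruct h as [h|h]; [inversion h; lra|]). inversion h.
  - intros t ht. rewrite kern_Lk. apply Rmult_le_pos; [left; apply exp_pos|].
    apply ph_nn. lra.
Qed.


Lemma cv_c_over_n C : Un_cv (fun n => C / INR (S n)) 0.
Proof.
  intros eps he. destruct (INR_unbounded (Rabs C / eps)) as [N HN].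
  exists N. intros n hn. unfold Rdist. rewrite Rminus_0_r.
  assert (hN : INR N <= INR n) by (apply le_INR; lia).
  assert (h0 : 0 < INR (S n)) by (apply lt_0_INR; lia).
  rewrite S_INR in *.
  unfold Rdiv. rewrite Rabs_mult, Rabs_inv, (Rabs_pos_eq (INR n + 1)) by lra.
  assert (Rabs C / eps < INR n + 1) by lra.
  assert (hC : 0 <= Rabs C) by apply Rabs_pos.
  apply (Rmult_lt_reg_r (INR n + 1)); [lra|].
  rewrite Rmult_assoc, Rinv_l by lra.
  apply (Rmult_lt_reg_r (/ eps)). apply Rinv_0_lt_compat; lra.
  replace (eps * (INR n + 1) * / eps) with (INR n + 1) by (field; lra).
  unfold Rdiv in H. lra.
Qed.

Lemma cv_shift u l : Un_cv (fun n => u (S n)) l -> Un_cv u l.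
Proof.
  intros H eps he. destruct (H eps he) as [N HN]. exists (S N). intros n hn.
  destruct n as [|n]; [lia|]. apply HN. lia.
Qed.

Lemma cv_shift' u l : Un_cv u l -> Un_cv (fun n => u (S n)) l.
Proof.
  intros H eps he. destruct (H eps he) as [N HN]. exists N. intros n hn. apply HN. lia.
Qed.

Lemma tele_bound (a : nat -> R) C : 0 <= C ->
  (forall j, (1 <= j)%nat -> Rabs (a (S j) - a j) <= C * (/ INR j - / INR (S j))) ->
  forall n m, (1 <= n)%nat -> (n <= m)%nat -> Rabs (a m - a n) <= C / INR n.
Proof.
  intros hC H n m hn hnm.
  assert (Hd : forall d, Rabs (a (n + d)%nat - a n) <= C * (/ INR n - / INR (n + d))).
  { induction d as [|d IH].
    - rewrite Nat.add_0_r, Rminus_diag, Rabs_R0. lra.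
    - rewrite Nat.add_succ_r.
      replace (a (S (n + d)) - a n) with ((a (S (n + d)) - a (n + d)%nat) + (a (n + d)%nat - a n)) by ring.
      eapply Rle_trans; [apply Rabs_triang|].
      specialize (H (n + d)%nat ltac:(lia)). lra. }
  replace m with (n + (m - n))%nat by lia.
  eapply Rle_trans; [apply Hd|].
  assert (0 < / INR (n + (m - n))) by (apply Rinv_0_lt_compat, lt_0_INR; lia).
  unfold Rdiv. nra.
Qed.

Lemma ln_le_sub1 z : 0 < z -> ln z <= z - 1.
Proof. intro hz. assert (H := exp_ineq1_le (ln z)). rewrite exp_ln in H by exact hz. lra. Qed.

Lemma lnd a b : 0 < a -> 0 < b -> 1 - b / a <= ln a - ln b <= a / b - 1.
Proof.
  intros ha hb. split.
  - assert (H := ln_le_sub1 (b / a) ltac:(unfold Rdiv; apply Rmult_lt_0_compat; [lra|apply Rinv_0_lt_compat; lra])).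
    unfold Rdiv in H. rewrite ln_mult, ln_Rinv in H by (try apply Rinv_0_lt_compat; lra).
    unfold Rdiv. lra.
  - assert (H := ln_le_sub1 (a / b) ltac:(unfold Rdiv; apply Rmult_lt_0_compat; [lra|apply Rinv_0_lt_compat; lra])).
    unfold Rdiv in H. rewrite ln_mult, ln_Rinv in H by (try apply Rinv_0_lt_compat; lra).
    unfold Rdiv. lra.
Qed.

Definition E0 (n : nat) (y : R) : R :=
  ln (INR (fact n)) + y * ln (INR n) - sum_f_R0 (fun k => ln (y + INR k)) n.
Definition E1 (n : nat) (y : R) : R := ln (INR n) - sum_f_R0 (fun k => / (y + INR k)) n.
Definition E2 (n : nat) (y : R) : R := sum_f_R0 (fun k => / (y + INR k) ^ 2) n.
Definition E3 (n : nat) (y : R) : R := - 2 * sum_f_R0 (fun k => / (y + INR k) ^ 3) n.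
Definition E4 (n : nat) (y : R) : R := 6 * sum_f_R0 (fun k => / (y + INR k) ^ 4) n.

Lemma fact_pos n : 0 < INR (fact n).
Proof. apply lt_0_INR. apply lt_O_fact. Qed.

Lemma diff_E0 j y : (1 <= j)%nat -> 0 < y ->
  Rabs (E0 (S j) y - E0 j y) <= y * (1 + y) * (/ INR j - / INR (S j)).
Proof.
  intros hj hy. unfold E0. rewrite tech5.
  rewrite fact_simpl, mult_INR, ln_mult by (try apply fact_pos; apply lt_0_INR; lia).
  assert (hn : 1 <= INR j) by (apply (le_INR 1); lia).
  rewrite S_INR. set (n := INR j) in *.
  replace (ln (n + 1) + ln (INR (fact j)) + y * ln (n + 1) -
     (sum_f_R0 (fun k => ln (y + INR k)) j + ln (y + (n + 1))) -
     (ln (INR (fact j)) + y * ln n - sum_f_R0 (fun k => ln (y + INR k)) j))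
   with (y * (ln (n + 1) - ln n) - (ln (y + (n + 1)) - ln (n + 1))) by ring.
  destruct (lnd (n + 1) n ltac:(lra) ltac:(lra)) as [A1 A2].
  destruct (lnd (y + (n + 1)) (n + 1) ltac:(lra) ltac:(lra)) as [B1 B2].
  set (A := ln (n + 1) - ln n) in *. set (B := ln (y + (n + 1)) - ln (n + 1)) in *.
  assert (e1 : 1 - n / (n + 1) = / (n + 1)) by (field; lra).
  assert (e2 : (n + 1) / n - 1 = / n) by (field; lra).
  assert (e3 : 1 - (n + 1) / (y + (n + 1)) = y / (y + n + 1)) by (field; lra).
  assert (e4 : (y + (n + 1)) / (n + 1) - 1 = y / (n + 1)) by (field; lra).
  rewrite e1 in A1. rewrite e2 in A2. rewrite e3 in B1. rewrite e4 in B2.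
  assert (lo : 0 <= y * A - B).
  { assert (y * / (n + 1) <= y * A) by (apply Rmult_le_compat_l; lra). unfold Rdiv in B2. lra. }
  assert (hi : y * A - B <= y * (1 + y) * (/ n - / (n + 1))).
  { assert (y * A <= y * / n) by (apply Rmult_le_compat_l; lra).
    assert (y / n - y / (y + n + 1) <= y * (1 + y) * (/ n - / (n + 1))).
    { replace (y / n - y / (y + n + 1)) with (y * (1 + y) / (n * (y + n + 1))) by (field; lra).
      replace (y * (1 + y) * (/ n - / (n + 1))) with (y * (1 + y) / (n * (n + 1))) by (field; lra).
      unfold Rdiv. apply Rmult_le_compat_l; [nra|].
      apply Rinv_le_contravar; nra. }
    unfold Rdiv in *. lra. }
  rewrite Rabs_pos_eq by lra. lra.
Qed.

Lemma diff_E1 j y Y : (1 <= j)%nat -> 0 < y -> y <= Y ->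
  Rabs (E1 (S j) y - E1 j y) <= (1 + Y) * (/ INR j - / INR (S j)).
Proof.
  intros hj hy hY. unfold E1. rewrite tech5.
  assert (hn : 1 <= INR j) by (apply (le_INR 1); lia).
  rewrite S_INR. set (n := INR j) in *.
  replace (ln (n + 1) - (sum_f_R0 (fun k => / (y + INR k)) j + / (y + (n + 1))) -
     (ln n - sum_f_R0 (fun k => / (y + INR k)) j))
   with ((ln (n + 1) - ln n) - / (y + (n + 1))) by ring.
  destruct (lnd (n + 1) n ltac:(lra) ltac:(lra)) as [A1 A2].
  set (A := ln (n + 1) - ln n) in *.
  assert (e1 : 1 - n / (n + 1) = / (n + 1)) by (field; lra).
  assert (e2 : (n + 1) / n - 1 = / n) by (field; lra).
  rewrite e1 in A1. rewrite e2 in A2.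
  assert (lo : / (y + (n + 1)) <= / (n + 1)) by (apply Rinv_le_contravar; lra).
  assert (hi : / n - / (y + (n + 1)) <= (1 + Y) * (/ n - / (n + 1))).
  { replace (/ n - / (y + (n + 1))) with ((y + 1) / (n * (y + n + 1))) by (field; lra).
    replace ((1 + Y) * (/ n - / (n + 1))) with ((1 + Y) / (n * (n + 1))) by (field; lra).
    unfold Rdiv. apply Rmult_le_compat; try lra.
    - left. apply Rinv_0_lt_compat. nra.
    - apply Rinv_le_contravar; nra. }
  rewrite Rabs_pos_eq by lra. lra.
Qed.

Lemma diff_E2 j y : (1 <= j)%nat -> 0 < y ->
  Rabs (E2 (S j) y - E2 j y) <= 1 * (/ INR j - / INR (S j)).
Proof.
  intros hj hy. unfold E2. rewrite tech5.
  assert (hn : 1 <= INR j) by (apply (le_INR 1); lia).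
  rewrite S_INR. set (n := INR j) in *.
  replace (sum_f_R0 (fun k => / (y + INR k) ^ 2) j + / (y + (n + 1)) ^ 2 -
     sum_f_R0 (fun k => / (y + INR k) ^ 2) j) with (/ (y + (n + 1)) ^ 2) by ring.
  replace (1 * (/ n - / (n + 1))) with (/ (n * (n + 1))) by (field; lra).
  rewrite Rabs_pos_eq by (left; apply Rinv_0_lt_compat; apply pow_lt; lra).
  apply Rinv_le_contravar; [nra|]. simpl. nra.
Qed.

Lemma diff_E3 j y : (1 <= j)%nat -> 0 < y ->
  Rabs (E3 (S j) y - E3 j y) <= 2 * (/ INR j - / INR (S j)).
Proof.
  intros hj hy. unfold E3. rewrite tech5.
  assert (hn : 1 <= INR j) by (apply (le_INR 1); lia).
  rewrite S_INR. set (n := INR j) in *.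
  replace (- 2 * (sum_f_R0 (fun k => / (y + INR k) ^ 3) j + / (y + (n + 1)) ^ 3) -
     - 2 * sum_f_R0 (fun k => / (y + INR k) ^ 3) j) with (- (2 * / (y + (n + 1)) ^ 3)) by ring.
  replace (2 * (/ n - / (n + 1))) with (2 * / (n * (n + 1))) by (field; lra).
  rewrite Rabs_Ropp.
  assert (hp : 0 < (y + (n + 1)) ^ 3) by (apply pow_lt; lra).
  rewrite Rabs_pos_eq by (apply Rmult_le_pos; [lra|left; apply Rinv_0_lt_compat; lra]).
  apply Rmult_le_compat_l; [lra|].
  apply Rinv_le_contravar; [nra|]. simpl.
  assert (1 <= y + (n + 1)) by lra. nra.
Qed.

Lemma dl_eq f x l l' : derivable_pt_lim f x l -> l = l' -> derivable_pt_lim f x l'.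
Proof. intros H ->. exact H. Qed.

Lemma dE0 n y : 0 < y -> derivable_pt_lim (E0 n) y (E1 n y).
Proof.
  intro hy.
  apply (dl_eq _ _ (ln (INR n) - sum_f_R0 (fun k => / (y + INR k)) n)); [|reflexivity].
  apply (derivable_pt_lim_minus (fun z => ln (INR (fact n)) + z * ln (INR n))
           (fun z => sum_f_R0 (fun k => ln (z + INR k)) n)).
  - apply is_derive_Reals. auto_derive; [exact I|ring].
  - apply (sum_deriv (fun k z => ln (z + INR k)) (fun k z => / (z + INR k))).
    intro k. apply is_derive_Reals. assert (0 <= INR k) by apply pos_INR.
    auto_derive; [lra|field; lra].
Qed.

Lemma dE1 n y : 0 < y -> derivable_pt_lim (E1 n) y (E2 n y).
Proof.
  intro hy.
  apply (dl_eq _ _ (0 - sum_f_R0 (fun k => - / (y + INR k) ^ 2) n)).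
  - apply (derivable_pt_lim_minus (fun z => ln (INR n))
           (fun z => sum_f_R0 (fun k => / (z + INR k)) n)).
    + apply derivable_pt_lim_const.
    + apply (sum_deriv (fun k z => / (z + INR k)) (fun k z => - / (z + INR k) ^ 2)).
      intro k. apply is_derive_Reals. assert (0 <= INR k) by apply pos_INR.
      auto_derive; [lra|field; lra].
  - unfold E2. rewrite <- (Rmult_1_l (sum_f_R0 (fun k => - / (y + INR k) ^ 2) n)).
    rewrite scal_sum. ring_simplify.
    replace (- (sum_f_R0 (fun i => - / (y + INR i) ^ 2 * 1) n)) with
      (-1 * sum_f_R0 (fun i => - / (y + INR i) ^ 2 * 1) n) by ring.
    rewrite scal_sum. apply sum_eq. intros. ring.
Qed.

Lemma dE2 n y : 0 < y -> derivable_pt_lim (E2 n) y (E3 n y).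
Proof.
  intro hy.
  apply (dl_eq _ _ (sum_f_R0 (fun k => - 2 * / (y + INR k) ^ 3) n)).
  - apply (sum_deriv (fun k z => / (z + INR k) ^ 2) (fun k z => - 2 * / (z + INR k) ^ 3)).
    intro k. apply is_derive_Reals. assert (0 <= INR k) by apply pos_INR.
    auto_derive; [nra|field; lra].
  - unfold E3. rewrite scal_sum. apply sum_eq. intros. ring.
Qed.

Lemma dE3 n y : 0 < y -> derivable_pt_lim (E3 n) y (E4 n y).
Proof.
  intro hy.
  apply (dl_eq _ _ (- 2 * sum_f_R0 (fun k => - 3 * / (y + INR k) ^ 4) n)).
  - apply derivable_pt_lim_scal.
    apply (sum_deriv (fun k z => / (z + INR k) ^ 3) (fun k z => - 3 * / (z + INR k) ^ 4)).
    intro k. apply is_derive_Reals. assert (0 <= INR k) by apply pos_INR.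
    assert (0 < y + INR k) by lra.
    auto_derive; [repeat apply Rmult_integral_contrapositive_currified; lra|field; lra].
  - unfold E4. rewrite !scal_sum. apply sum_eq. intros. ring.
Qed.

Lemma lim_step (Ea Eb Ec : nat -> R -> R) (f f' : R -> R) (C : R -> R) :
  (forall n y, 0 < y -> derivable_pt_lim (Ea n) y (Eb n y)) ->
  (forall n y, 0 < y -> derivable_pt_lim (Eb n) y (Ec n y)) ->
  (forall y, 0 < y -> Un_cv (fun N => Ea (S N) y) (f y)) ->
  (forall x, 0 < x -> derivable_pt_lim f x (f' x)) ->
  (forall x, 0 < x -> 0 <= C x /\ forall j y, (1 <= j)%nat -> 0 < y -> Rabs (y - x) < x / 2 ->
        Rabs (Eb (S j) y - Eb j y) <= C x * (/ INR j - / INR (S j))) ->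
  forall x, 0 < x -> Un_cv (fun N => Eb (S N) x) (f' x).
Proof.
  intros hab hbc hcv hf hC x hx.
  destruct (hC x hx) as [hC0 hCb].
  assert (Hb : forall n m y, Rabs (y - x) < x / 2 -> (n <= m)%nat ->
            Rabs (Eb (S m) y - Eb (S n) y) <= C x / INR (S n)).
  { intros n m y hy hnm.
    apply (tele_bound (fun j => Eb j y) (C x) hC0); try lia.
    intros j hj. apply hCb; auto. apply Rabs_def2 in hy. lra. }
  assert (Hd := deriv_lim (fun N => Ea (S N)) (fun N => Eb (S N)) f x (x / 2)
                 (fun N => C x / INR (S N)) ltac:(lra)).
  assert (Hd' : derivable_pt_lim f x (limR (fun N => Eb (S N) x))).
  { apply Hd.
    - intros n y hy. apply hab. apply Rabs_def2 in hy. lra.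
    - intros n y hy. apply derivable_continuous_pt. exists (Ec (S n) y). apply hbc.
      apply Rabs_def2 in hy. lra.
    - intros y hy. apply hcv. apply Rabs_def2 in hy. lra.
    - apply cv_c_over_n.
    - exact Hb. }
  rewrite (uniqueness_limite f x (f' x) _ (hf x hx) Hd').
  destruct (ucauchy (fun N => Eb (S N)) (fun y => Rabs (y - x) < x / 2) (fun N => C x / INR (S N))
             (cv_c_over_n (C x)) Hb x) as [H _].
  - rewrite Rminus_diag, Rabs_R0. lra.
  - exact H.
Qed.

Lemma poch_pos y n : 0 < y -> 0 < poch y n.
Proof.
  intro hy. induction n as [|n IH]; [exact hy|].
  change (poch y (S n)) with (poch y n * (y + INR (S n))).
  apply Rmult_lt_0_compat; auto. assert (0 <= INR (S n)) by apply pos_INR. lra.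
Qed.

Lemma ln_poch y n : 0 < y -> ln (poch y n) = sum_f_R0 (fun k => ln (y + INR k)) n.
Proof.
  intro hy. induction n as [|n IH].
  - simpl. rewrite Rplus_0_r. reflexivity.
  - change (poch y (S n)) with (poch y n * (y + INR (S n))). rewrite tech5.
    rewrite ln_mult; [rewrite IH; reflexivity|apply poch_pos; auto|].
    assert (0 <= INR (S n)) by apply pos_INR. lra.
Qed.

Lemma Gamma_seq_exp y n : 0 < y -> (1 <= n)%nat -> Gamma_seq y n = exp (E0 n y).
Proof.
  intros hy hn. unfold Gamma_seq, E0, Rpower.
  assert (hN : 0 < INR n) by (apply lt_0_INR; lia).
  assert (hf := fact_pos n). assert (hp := poch_pos y n hy).
  rewrite <- ln_poch by exact hy.
  unfold Rminus. rewrite !exp_plus. rewrite exp_Ropp, (exp_ln (poch y n)) by exact hp.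
  rewrite (exp_ln (INR (fact n))) by exact hf. rewrite Rmult_comm with (r1 := y). unfold Rdiv. ring.
Qed.

Lemma lnG_cv (G : R -> R) (hG : is_Gamma_on_pos G) y : 0 < y ->
  Un_cv (fun N => E0 (S N) y) (ln (G y)).
Proof.
  intro hy.
  assert (Hb : forall n m z, z = y -> (n <= m)%nat ->
            Rabs (E0 (S m) z - E0 (S n) z) <= y * (1 + y) / INR (S n)).
  { intros n m z -> hnm.
    apply (tele_bound (fun j => E0 j y) (y * (1 + y))); try lia.
    - nra.
    - intros j hj. apply diff_E0; auto. }
  destruct (ucauchy (fun N => E0 (S N)) (fun z => z = y) (fun N => y * (1 + y) / INR (S N))
             (cv_c_over_n _) Hb y eq_refl) as [Hl _].
  set (l := limR (fun N => E0 (S N) y)) in *.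
  assert (H1 : Un_cv (fun N => Gamma_seq y (S N)) (exp l)).
  { assert (He : Un_cv (fun N => exp (E0 (S N) y)) (exp l)).
    { apply (continuity_seq exp). apply derivable_continuous_pt, derivable_pt_exp. exact Hl. }
    intros eps he. destruct (He eps he) as [N HN]. exists N. intros n hn.
    rewrite Gamma_seq_exp by (auto; lia). apply HN; auto. }
  assert (H2 : Un_cv (fun N => Gamma_seq y (S N)) (G y)).
  { apply cv_shift'. apply hG. exact hy. }
  rewrite <- (UL_sequence _ _ _ H1 H2). rewrite ln_exp. exact Hl.
Qed.

Lemma psi_series (G psi psi1 psi2 : R -> R)
  (hG : is_Gamma_on_pos G)
  (hpsi : forall x, 0 < x -> derivable_pt_lim (fun t => ln (G t)) x (psi x))
  (hpsi1 : forall x, 0 < x -> derivable_pt_lim psi x (psi1 x))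
  (hpsi2 : forall x, 0 < x -> derivable_pt_lim psi1 x (psi2 x)) :
  forall x, 0 < x -> Un_cv (fun N => E2 N x) (psi1 x) /\ Un_cv (fun N => E3 N x) (psi2 x).
Proof.
  assert (S1 := lim_step E0 E1 E2 (fun t => ln (G t)) psi (fun x => 1 + 3 * x / 2)
                 dE0 dE1 (lnG_cv G hG) hpsi).
  assert (S1' : forall x, 0 < x -> Un_cv (fun N => E1 (S N) x) (psi x)).
  { apply S1. intros x hx. split; [lra|]. intros j y hj hy hyx.
    apply diff_E1; auto. apply Rabs_def2 in hyx. lra. }
  assert (S2 := lim_step E1 E2 E3 psi psi1 (fun _ => 1) dE1 dE2 S1' hpsi1).
  assert (S2' : forall x, 0 < x -> Un_cv (fun N => E2 (S N) x) (psi1 x)).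
  { apply S2. intros x hx. split; [lra|]. intros j y hj hy hyx. apply diff_E2; auto. }
  assert (S3 := lim_step E2 E3 E4 psi1 psi2 (fun _ => 2) dE2 dE3 S2' hpsi2).
  assert (S3' : forall x, 0 < x -> Un_cv (fun N => E3 (S N) x) (psi2 x)).
  { apply S3. intros x hx. split; [lra|]. intros j y hj hy hyx. apply diff_E3; auto. }
  intros x hx. split; apply cv_shift; auto.
Qed.


Lemma sum_shift1 (f : nat -> R) N : sum_f_R0 f (S N) = f O + sum_f_R0 (fun k => f (S k)) N.
Proof.
  induction N as [|N IH].
  - simpl. ring.
  - rewrite tech5. rewrite IH. rewrite tech5. ring.
Qed.

Lemma E2_shift N x : E2 (S N) x = / x ^ 2 + E2 N (x + 1).
Proof.
  unfold E2. rewrite sum_shift1. simpl INR at 1. rewrite Rplus_0_r. f_equal.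
  apply sum_eq. intros. rewrite S_INR. f_equal. f_equal. ring.
Qed.

Lemma E3_shift N x : E3 (S N) x = - 2 / x ^ 3 + E3 N (x + 1).
Proof.
  unfold E3. rewrite sum_shift1. simpl INR at 1. rewrite Rplus_0_r.
  unfold Rdiv. rewrite Rmult_plus_distr_l. f_equal.
  f_equal. apply sum_eq. intros. rewrite S_INR. f_equal. f_equal. ring.
Qed.

Lemma cv_const c : Un_cv (fun _ => c) c.
Proof. intros eps he. exists O. intros. unfold Rdist. rewrite Rminus_diag, Rabs_R0. exact he. Qed.

Lemma cv_plus_const u l c : Un_cv u l -> Un_cv (fun n => c + u n) (c + l).
Proof. intro H. apply CV_plus; [apply cv_const|exact H]. Qed.

Lemma squeeze0 (u : nat -> R) C : (forall N, Rabs (u N) <= C / INR (S N)) -> Un_cv u 0.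
Proof.
  intro H. intros eps he. destruct (cv_c_over_n C eps he) as [N HN]. exists N. intros n hn.
  specialize (HN n hn). specialize (H n). unfold Rdist in *. rewrite Rminus_0_r in *.
  eapply Rle_lt_trans; [exact H|]. eapply Rle_lt_trans; [apply Rle_abs|exact HN].
Qed.

Lemma E2_bound N y : 0 < y -> 0 <= E2 N y <= / y ^ 2 + / y - / (y + INR N).
Proof.
  intro hy. induction N as [|N IH].
  - change (E2 0 y) with (/ (y + INR 0) ^ 2). change (INR 0) with 0. rewrite !Rplus_0_r. split.
    + left. apply Rinv_0_lt_compat. apply pow_lt. lra.
    + lra.
  - replace (E2 (S N) y) with (E2 N y + / (y + INR (S N)) ^ 2) by (unfold E2; rewrite tech5; reflexivity).
    rewrite S_INR. assert (hN : 0 <= INR N) by apply pos_INR.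
    assert (h1 : 0 < / (y + (INR N + 1)) ^ 2) by (apply Rinv_0_lt_compat; apply pow_lt; lra).
    assert (h2 : / (y + (INR N + 1)) ^ 2 <= / (y + INR N) - / (y + (INR N + 1))).
    { replace (/ (y + INR N) - / (y + (INR N + 1))) with (/ ((y + INR N) * (y + INR N + 1))) by (field; lra).
      apply Rinv_le_contravar; [nra|]. simpl. nra. }
    lra.
Qed.

Lemma E3_bound N y : 0 < y -> - (2 / y * (/ y ^ 2 + / y)) <= E3 N y <= 0.
Proof.
  intro hy.
  assert (H : 0 <= sum_f_R0 (fun k => / (y + INR k) ^ 3) N <= / y * E2 N y).
  { unfold E2. rewrite scal_sum. split.
    - apply cond_pos_sum. intro k. assert (0 <= INR k) by apply pos_INR.
      left. apply Rinv_0_lt_compat, pow_lt. lra.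
    - apply sum_Rle. intros k _. assert (0 <= INR k) by apply pos_INR.
      assert (0 < y + INR k) by lra.
      replace (/ (y + INR k) ^ 2 * / y) with (/ ((y + INR k) ^ 2 * y)) by (field; lra).
      apply Rinv_le_contravar. { apply Rmult_lt_0_compat; [apply pow_lt|]; lra. } simpl. assert (0 < (y + INR k) * (y + INR k)) by nra. nra. }
  destruct (E2_bound N y hy) as [B1 B2].
  assert (/ (y + INR N) > 0). { apply Rinv_0_lt_compat. assert (0 <= INR N) by apply pos_INR. lra. }
  assert (0 < / y) by (apply Rinv_0_lt_compat; lra).
  unfold E3. split; [|lra].
  assert (/ y * E2 N y <= / y * (/ y ^ 2 + / y)) by (apply Rmult_le_compat_l; lra).
  unfold Rdiv. lra.
Qed.

Definition Pser (p1 p2 : R -> R) : Prop :=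
  forall x, 0 < x -> Un_cv (fun N => E2 N x) (p1 x) /\ Un_cv (fun N => E3 N x) (p2 x).

Lemma p1_shift p1 p2 x : Pser p1 p2 -> 0 < x -> p1 x = / x ^ 2 + p1 (x + 1).
Proof.
  intros HP hx. destruct (HP x hx) as [H1 _]. destruct (HP (x + 1) ltac:(lra)) as [H2 _].
  apply (UL_sequence (fun N => E2 (S N) x)).
  - apply (cv_shift' (fun N => _ N x)). exact H1.
  - intros eps he. destruct (cv_plus_const _ _ (/ x ^ 2) H2 eps he) as [N HN]. exists N.
    intros n hn. rewrite E2_shift. apply HN; auto.
Qed.

Lemma p2_shift p1 p2 x : Pser p1 p2 -> 0 < x -> p2 x = - 2 / x ^ 3 + p2 (x + 1).
Proof.
  intros HP hx. destruct (HP x hx) as [_ H1]. destruct (HP (x + 1) ltac:(lra)) as [_ H2].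
  apply (UL_sequence (fun N => E3 (S N) x)).
  - apply (cv_shift' (fun N => _ N x)). exact H1.
  - intros eps he. destruct (cv_plus_const _ _ (- 2 / x ^ 3) H2 eps he) as [N HN]. exists N.
    intros n hn. rewrite E3_shift. apply HN; auto.
Qed.

Lemma p1_bound p1 p2 y : Pser p1 p2 -> 0 < y -> 0 <= p1 y <= / y ^ 2 + / y.
Proof.
  intros HP hy. destruct (HP y hy) as [H1 _]. split.
  - apply (@Rle_cv_lim (fun _ => 0) (fun N => E2 N y)); [|apply cv_const|exact H1].
    intro n. apply E2_bound; auto.
  - apply (@Rle_cv_lim (fun N => E2 N y) (fun _ => / y ^ 2 + / y)); [|exact H1|apply cv_const].
    intro n. destruct (E2_bound n y hy). assert (0 <= INR n) by apply pos_INR.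
    assert (0 < / (y + INR n)) by (apply Rinv_0_lt_compat; lra). lra.
Qed.

Lemma p2_bound p1 p2 y : Pser p1 p2 -> 0 < y -> - (2 / y * (/ y ^ 2 + / y)) <= p2 y <= 0.
Proof.
  intros HP hy. destruct (HP y hy) as [_ H1]. split.
  - apply (@Rle_cv_lim (fun _ => - (2 / y * (/ y ^ 2 + / y))) (fun N => E3 N y)); [|apply cv_const|exact H1].
    intro n. apply E3_bound; auto.
  - apply (@Rle_cv_lim (fun N => E3 N y) (fun _ => 0)); [|exact H1|apply cv_const].
    intro n. apply E3_bound; auto.
Qed.


Definition r0 (x : R) : R := (x ^ 2 + 12) / (12 * x ^ 4 * (x + 1) ^ 2).
Definition hq (z : R) : R := / (2 * z ^ 2) + / z + z ^ 2 * (r0 z - r0 (z + 1)) / 2.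
Definition kap (z : R) : R := / z ^ 2 - hq z + hq (z + 1).

Lemma kap_Lk z : 0 < z -> kap z = lapf Lk z.
Proof.
  intro hz. unfold kap, hq, r0, lapf, Lk.
  replace (INR (fact 3)) with 6 by (simpl; ring).
  replace (INR (fact 2)) with 2 by (simpl; ring).
  replace (INR (fact 1)) with 1 by (simpl; ring).
  replace (INR (fact 0)) with 1 by (simpl; ring).
  field. repeat split; lra.
Qed.

Lemma r0_bound z : 1 <= z -> 0 <= r0 z <= 2 * (/ z) ^ 4.
Proof.
  intro hz. unfold r0.
  assert (h4 : 0 < z ^ 4) by (apply pow_lt; lra).
  assert (h2 : 0 < (z + 1) ^ 2) by (apply pow_lt; lra).
  assert (hd : 0 < 12 * z ^ 4 * (z + 1) ^ 2) by (apply Rmult_lt_0_compat; lra).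
  split.
  - unfold Rdiv. apply Rmult_le_pos; [|left; apply Rinv_0_lt_compat; lra].
    assert (0 <= z ^ 2) by (apply pow_le; lra). lra.
  - apply (Rmult_le_reg_r (12 * z ^ 4 * (z + 1) ^ 2)); [lra|].
    unfold Rdiv. rewrite Rmult_assoc, Rinv_l by lra. rewrite Rmult_1_r.
    replace (2 * (/ z) ^ 4 * (12 * z ^ 4 * (z + 1) ^ 2)) with (24 * (z + 1) ^ 2) by (field; lra).
    simpl. nra.
Qed.

Lemma hq_bound z : 1 <= z -> Rabs (hq z) <= 4 / z.
Proof.
  intro hz. unfold hq.
  destruct (r0_bound z hz) as [a1 a2]. destruct (r0_bound (z + 1) ltac:(lra)) as [b1 b2].
  set (u := / z).
  assert (hu : 0 < u <= 1).
  { unfold u. split; [apply Rinv_0_lt_compat; lra|]. rewrite <- Rinv_1. apply Rinv_le_contravar; lra. }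
  assert (hu1 : / (z + 1) <= u) by (unfold u; apply Rinv_le_contravar; lra).
  assert (hz2 : z ^ 2 * u ^ 2 = 1) by (unfold u; field; lra).
  assert (q1 : (/ (z + 1)) ^ 4 <= u ^ 4).
  { apply pow_incr. split; [left; apply Rinv_0_lt_compat; lra|exact hu1]. }
  assert (e0 : / (2 * z ^ 2) = u ^ 2 / 2) by (unfold u; field; lra).
  assert (t1 : 0 <= z ^ 2 * r0 z <= 2 * u ^ 2).
  { split; [apply Rmult_le_pos; [apply pow_le; lra|exact a1]|].
    replace (2 * u ^ 2) with (z ^ 2 * (2 * u ^ 4)) by (unfold u; field; lra).
    apply Rmult_le_compat_l; [apply pow_le; lra|exact a2]. }
  assert (t2 : 0 <= z ^ 2 * r0 (z + 1) <= 2 * u ^ 2).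
  { split; [apply Rmult_le_pos; [apply pow_le; lra|exact b1]|].
    replace (2 * u ^ 2) with (z ^ 2 * (2 * u ^ 4)) by (unfold u; field; lra).
    apply Rmult_le_compat_l; [apply pow_le; lra|lra]. }
  replace (4 / z) with (4 * u) by (unfold u; field; lra).
  rewrite e0.
  replace (z ^ 2 * (r0 z - r0 (z + 1)) / 2) with ((z ^ 2 * r0 z - z ^ 2 * r0 (z + 1)) / 2) by field.
  assert (u ^ 2 <= u) by (simpl; nra).
  apply Rabs_le. split; lra.
Qed.

Definition f0 (p1 p2 : R -> R) (x : R) : R := p1 x ^ 2 + p2 x - r0 x.

Lemma f0_bound p1 p2 z : Pser p1 p2 -> 1 <= z -> Rabs (f0 p1 p2 z) <= 10 / z.
Proof.
  intros HP hz.
  destruct (p1_bound p1 p2 z HP ltac:(lra)) as [a1 a2].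
  destruct (p2_bound p1 p2 z HP ltac:(lra)) as [b1 b2].
  destruct (r0_bound z hz) as [c1 c2].
  set (u := / z) in *.
  assert (hu : 0 < u <= 1).
  { unfold u. split; [apply Rinv_0_lt_compat; lra|]. rewrite <- Rinv_1. apply Rinv_le_contravar; lra. }
  assert (e1 : / z ^ 2 = u ^ 2) by (unfold u; rewrite pow_inv; reflexivity).
  rewrite e1 in a2, b1.
  replace (2 / z) with (2 * u) in b1 by (unfold u; field; lra).
  replace (10 / z) with (10 * u) by (unfold u; field; lra).
  unfold f0.
  assert (u ^ 2 <= u) by (simpl; nra).
  assert (u ^ 4 <= u) by (simpl; nra).
  assert (p1 z ^ 2 <= 4 * u ^ 2) by (simpl; nra).
  assert (2 * u * (u ^ 2 + u) <= 4 * u) by (simpl; nra).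
  assert (0 <= p1 z ^ 2) by (simpl; nra). apply Rabs_le. split; lra.
Qed.

Lemma delta_id P Q z : 0 < z ->
  (/ z ^ 2 + P) ^ 2 + (- 2 / z ^ 3 + Q) - r0 z - (P ^ 2 + Q - r0 (z + 1))
  = 2 / z ^ 2 * (/ z ^ 2 + P - hq z).
Proof. intro hz. unfold hq, r0. field. repeat split; lra. Qed.

Definition Kf (y : R) : R := limR (fun N => sum_f_R0 (fun j => lapf Lk (y + INR j)) N).

Lemma kap_partial y N : 0 < y ->
  sum_f_R0 (fun j => kap (y + INR j)) N = E2 N y - hq y + hq (y + INR N + 1).
Proof.
  intro hy. induction N as [|N IH].
  - simpl sum_f_R0. unfold kap, E2. change (INR 0) with 0. rewrite !Rplus_0_r. simpl sum_f_R0.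
    replace (y + 0) with y by ring. field. lra.
  - rewrite tech5, IH. unfold E2. rewrite tech5. fold (E2 N y). unfold kap.
    rewrite S_INR. replace (y + (INR N + 1) + 1) with (y + INR N + 1 + 1) by ring.
    replace (y + (INR N + 1)) with (y + INR N + 1) by ring. ring.
Qed.

Lemma Kf_cv p1 p2 y : Pser p1 p2 -> 0 < y ->
  Un_cv (fun N => sum_f_R0 (fun j => lapf Lk (y + INR j)) N) (p1 y - hq y).
Proof.
  intros HP hy.
  assert (E : forall N, sum_f_R0 (fun j => lapf Lk (y + INR j)) N = E2 N y - hq y + hq (y + INR N + 1)).
  { intro N. rewrite <- kap_partial by exact hy. apply sum_eq. intros j _.
    symmetry. apply kap_Lk. assert (0 <= INR j) by apply pos_INR. lra. }
  intros eps he.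
  assert (H0 : Un_cv (fun N => hq (y + INR N + 1)) 0).
  { apply (squeeze0 _ 4). intro N. assert (0 <= INR N) by apply pos_INR.
    eapply Rle_trans; [apply hq_bound; lra|].
    rewrite S_INR. unfold Rdiv. apply Rmult_le_compat_l; [lra|].
    apply Rinv_le_contravar; lra. }
  assert (H := CV_plus _ _ _ _ (CV_minus _ _ _ _ (proj1 (HP y hy)) (cv_const (hq y))) H0).
  rewrite Rplus_0_r in H. destruct (H eps he) as [N HN]. exists N. intros n hn.
  rewrite E. apply HN. exact hn.
Qed.

Lemma Kf_val p1 p2 y : Pser p1 p2 -> 0 < y -> Kf y = p1 y - hq y.
Proof. intros HP hy. unfold Kf. apply limR_spec. apply Kf_cv with p2; auto. Qed.

Lemma Kf_CM p1 p2 : Pser p1 p2 -> CMf Kf.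
Proof.
  intro HP. unfold Kf. apply CMf_series.
  - intro k. apply CMf_shift; [apply pos_INR|apply CMf_Lk].
  - intros y hy. exists (p1 y - hq y). apply Kf_cv with p2; auto.
Qed.

Lemma inv_sq_CM b : 0 <= b -> CMf (fun x => 2 / (x + b) ^ 2).
Proof.
  intro hb. apply (CMf_ext (lapf ((2, 1%nat, b) :: nil))).
  - apply CMf_lap.
    + intros c k b' h. destruct h as [h|h]; [inversion h; lra|inversion h].
    + intros t ht. simpl. assert (0 < exp (- (b * t))) by apply exp_pos. nra.
  - intros x hx. simpl. field. lra.
Qed.

Lemma f0_CM p1 p2 : Pser p1 p2 -> CMf (f0 p1 p2).
Proof.
  intro HP.
  set (F := fun k x => 2 / (x + INR k) ^ 2 * Kf (x + INR k)).
  assert (HF : forall k x, 0 < x -> F k x = f0 p1 p2 (x + INR k) - f0 p1 p2 (x + INR k + 1)).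
  { intros k x hx. assert (0 <= INR k) by apply pos_INR. set (z := x + INR k).
    assert (hz : 0 < z) by (unfold z; lra). unfold F. fold z.
    rewrite (Kf_val p1 p2 z HP hz). unfold f0.
    rewrite (p1_shift p1 p2 z HP hz), (p2_shift p1 p2 z HP hz).
    symmetry. apply delta_id. exact hz. }
  assert (Hp : forall x N, 0 < x -> sum_f_R0 (fun k => F k x) N = f0 p1 p2 x - f0 p1 p2 (x + INR N + 1)).
  { intros x N hx. induction N as [|N IH].
    - simpl sum_f_R0. rewrite HF by exact hx. change (INR 0) with 0. rewrite Rplus_0_r. reflexivity.
    - rewrite tech5, IH, HF by exact hx. rewrite S_INR.
      replace (x + (INR N + 1)) with (x + INR N + 1) by ring. ring. }
  assert (Hc : forall x, 0 < x -> Un_cv (fun N => sum_f_R0 (fun k => F k x) N) (f0 p1 p2 x)).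
  { intros x hx.
    assert (H0 : Un_cv (fun N => f0 p1 p2 (x + INR N + 1)) 0).
    { apply (squeeze0 _ 10). intro N. assert (0 <= INR N) by apply pos_INR.
      eapply Rle_trans; [apply f0_bound; auto; lra|].
      rewrite S_INR. unfold Rdiv. apply Rmult_le_compat_l; [lra|].
      apply Rinv_le_contravar; lra. }
    assert (H := CV_minus _ _ _ _ (cv_const (f0 p1 p2 x)) H0). rewrite Rminus_0_r in H.
    intros eps he. destruct (H eps he) as [N HN].
    exists N. intros n hn. rewrite Hp by exact hx. apply HN. exact hn. }
  apply (CMf_ext (fun x => limR (fun N => sum_f_R0 (fun k => F k x) N))).
  - apply CMf_series.
    + intro k. unfold F. apply CMf_mult.
      * apply inv_sq_CM. apply pos_INR.
      * apply CMf_shift; [apply pos_INR|]. apply (Kf_CM p1 p2 HP).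
    + intros y hy. exists (f0 p1 p2 y). apply Hc. exact hy.
  - intros x hx. apply limR_spec. apply Hc. exact hx.
Qed.


Lemma CMf_cmp f : CMf f <-> completely_monotonic_pos f.
Proof.
  split.
  - intros [D [[H1 H2] H0]]. exists D. auto.
  - intros [D [H0 [H1 H2]]]. exists D. split; [split|]; auto.
Qed.

Lemma extra_CM : CMf (fun x => / x ^ 3 * / (x + 1) ^ 2).
Proof.
  apply CMf_mult.
  - apply (CMf_ext (lapf ((1/2, 2%nat, 0) :: nil))).
    + apply CMf_lap.
      * intros c k b h. destruct h as [h|h]; [inversion h; lra|inversion h].
      * intros t ht. simpl. assert (0 < exp (- (0 * t))) by apply exp_pos. nra.
    + intros x hx. simpl. field. lra.
  - apply (CMf_ext (lapf ((1, 1%nat, 1) :: nil))).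
    + apply CMf_lap.
      * intros c k b h. destruct h as [h|h]; [inversion h; lra|inversion h].
      * intros t ht. simpl. assert (0 < exp (- (1 * t))) by apply exp_pos. nra.
    + intros x hx. simpl. field. lra.
Qed.

Theorem theorem1p1 (lam : R) (G psi psi1 psi2 : R -> R)
  (hG : is_Gamma_on_pos G)
  (hpsi : forall x, 0 < x -> derivable_pt_lim (fun t => ln (G t)) x (psi x))
  (hpsi1 : forall x, 0 < x -> derivable_pt_lim psi x (psi1 x))
  (hpsi2 : forall x, 0 < x -> derivable_pt_lim psi1 x (psi2 x)) :
  completely_monotonic_pos
    (fun x => (psi1 x) ^ 2 + psi2 x
              - (x ^ 2 + lam * x + 12) / (12 * x ^ 4 * (x + 1) ^ 2))
  <-> lam <= 0.
Proof.
  assert (HP : Pser psi1 psi2) by exact (psi_series G psi psi1 psi2 hG hpsi hpsi1 hpsi2).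
  split.
  - intro H. apply CMf_cmp in H. destruct H as [D [[_ H2] H0]].
    destruct (Rle_dec lam 0) as [h|h]; [exact h|exfalso]. apply Rnot_le_lt in h.
    set (x := Rmin (1/2) (lam / 200)).
    assert (hx1 : x <= 1/2) by apply Rmin_l.
    assert (hx2 : x <= lam / 200) by apply Rmin_r.
    assert (hx0 : 0 < x) by (apply Rmin_glb_lt; lra).
    assert (hf := H2 O x hx0). rewrite H0 in hf by exact hx0. change ((-1) ^ 0) with 1 in hf. rewrite Rmult_1_l in hf. cbv beta in hf.
    rewrite (p1_shift psi1 psi2 x HP hx0), (p2_shift psi1 psi2 x HP hx0) in hf.
    destruct (p1_bound psi1 psi2 (x + 1) HP ltac:(lra)) as [a1 a2].
    destruct (p2_bound psi1 psi2 (x + 1) HP ltac:(lra)) as [b1 b2].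
    set (A := psi1 (x + 1)) in *. set (B := psi2 (x + 1)) in *.
    assert (hA : A <= 2).
    { assert (/ (x + 1) <= 1) by (rewrite <- Rinv_1; apply Rinv_le_contravar; lra).
      assert (/ (x + 1) ^ 2 <= 1).
      { rewrite <- Rinv_1. apply Rinv_le_contravar; [lra|]. simpl. nra. }
      lra. }
    set (T := (/ x ^ 2 + A) ^ 2 + (-2 / x ^ 3 + B) - (x ^ 2 + lam * x + 12) / (12 * x ^ 4 * (x + 1) ^ 2)) in hf.
    assert (hpos : 0 < 12 * x ^ 4 * (x + 1) ^ 2).
    { apply Rmult_lt_0_compat; [apply Rmult_lt_0_compat; [lra|apply pow_lt; lra]|apply pow_lt; lra]. }
    assert (HT : T * (12 * x ^ 4 * (x + 1) ^ 2) =
              - 24 * x ^ 3 - 37 * x ^ 2 - lam * x + x ^ 2 * (x + 1) ^ 2 * (24 * A + 12 * A ^ 2 * x ^ 2)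
              + 12 * B * x ^ 4 * (x + 1) ^ 2).
    { unfold T. field. lra. }
    assert (q1 : x ^ 2 * (x + 1) ^ 2 * (24 * A + 12 * A ^ 2 * x ^ 2) <= 135 * x ^ 2).
    { assert (e1 : (x + 1) ^ 2 <= 9 / 4) by (simpl; nra).
      assert (e2 : 24 * A + 12 * A ^ 2 * x ^ 2 <= 60).
      { assert (A ^ 2 <= 4) by (simpl; nra). assert (x ^ 2 <= 1 / 4) by (simpl; nra).
        assert (A ^ 2 * x ^ 2 <= 1) by (assert (0 <= A ^ 2) by (simpl; nra); assert (0 <= x ^ 2) by (simpl; nra); nra).
        lra. }
      assert (e3 : 0 <= 24 * A + 12 * A ^ 2 * x ^ 2).
      { assert (0 <= A ^ 2 * x ^ 2) by (apply Rmult_le_pos; apply pow_le; lra). lra. }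
      assert (e4 : 0 <= x ^ 2) by (apply pow_le; lra).
      assert (e5 : 0 <= (x + 1) ^ 2) by (apply pow_le; lra).
      replace (135 * x ^ 2) with (x ^ 2 * (9 / 4) * 60) by field.
      apply Rmult_le_compat; try lra.
      - apply Rmult_le_pos; lra.
      - apply Rmult_le_compat_l; lra. }
    assert (q2 : 12 * B * x ^ 4 * (x + 1) ^ 2 <= 0).
    { assert (0 <= x ^ 4) by (apply pow_le; lra). assert (0 <= (x + 1) ^ 2) by (apply pow_le; lra).
      assert (0 <= x ^ 4 * (x + 1) ^ 2) by (apply Rmult_le_pos; lra).
      replace (12 * B * x ^ 4 * (x + 1) ^ 2) with (12 * B * (x ^ 4 * (x + 1) ^ 2)) by ring. nra. }
    assert (q3 : 0 <= x ^ 3) by (apply pow_le; lra).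
    assert (q4 : 135 * x ^ 2 < lam * x).
    { replace (135 * x ^ 2) with (135 * x * x) by ring. assert (135 * x < lam) by lra. nra. }
    assert (T * (12 * x ^ 4 * (x + 1) ^ 2) < 0) by (rewrite HT; assert (0 <= x ^ 2) by (apply pow_le; lra); lra).
    assert (T < 0).
    { destruct (Rle_dec 0 T) as [hT|hT]; [|lra]. assert (0 <= T * (12 * x ^ 4 * (x + 1) ^ 2)) by (apply Rmult_le_pos; lra). lra. }
    lra.
  - intro hl. apply CMf_cmp.
    apply (CMf_ext (fun x => f0 psi1 psi2 x + (- lam / 12) * (/ x ^ 3 * / (x + 1) ^ 2))).
    + apply CMf_plus.
      * apply f0_CM. exact HP.
      * apply CMf_scal; [lra|]. apply extra_CM.
    + intros x hx. unfold f0, r0. field. lra.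
Qed.
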